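(* Let $V$ be a vector configuration with $\mathrm{DD}(V)>0$. Then there is a subconfiguration $W\subseteq V$ of rank $1$ with $\operatorname{lin}(W)\cap V=W$ and $\mathrm{DD}(W)>0$ such that $\mathrm{DD}(V)=\mathrm{DD}(W)+\mathrm{DD}(V/W)$.
   Context: A vector configuration is a finite family (repetitions allowed) $U$ of vectors in a real vector space $E$; a subconfiguration is a subfamily, $\operatorname{rank}(U)=\dim\operatorname{lin}(U)$, cardinalities count multiplicities; $\operatorname{lin}(W)\cap V=W$ means the elements of $V$ lying in $\operatorname{lin}(W)$ are exactly those of $W$. The quotient $V/W$ is the configuration in $E/\operatorname{lin}(W)$ of the images of the elements of $V\setminus W$. Covector discrepancy: $\mathrm{DD}(U)=\max_f\big|\,|\{u\in U: f(u)>0\}|-|\{u\in U:f(u)<0\}|\,\big|$ over all linear functionals $f$ on $E$. *)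

(* Defs.v *)
From HB Require Import structures.
From mathcomp Require Import all_boot all_order all_algebra.
From mathcomp Require Import boolp reals.

Set Implicit Arguments.
Unset Strict Implicit.
Unset Printing Implicit Defensive.
Import Order.TTheory GRing.Theory Num.Theory.
Local Open Scope ring_scope.

Section VectorConfigurations.
Variables (R : realType) (E : lmodType R).

(* A vector configuration is a finite family (with repetitions): a [seq E].
   Subconfigurations are given by a mask [m : bitseq] (same size as V). *)

Definition in_lin (S : seq E) (x : E) : Prop :=
  exists c : 'I_(size S) -> R, x = \sum_(i < size S) c i *: S`_i.

Definition rank1 (S : seq E) : Prop :=
  exists w : E, w != 0 /\ forall x, in_lin S x <-> exists a : R, x = a *: w.

Definition npos (f : E -> R) (S : seq E) : nat := count (fun u => 0 < f u) S.
Definition nneg (f : E -> R) (S : seq E) : nat := count (fun u => f u < 0) S.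

Definition disc (f : E -> R) (S : seq E) : nat :=
  `|(npos f S)%:Z - (nneg f S)%:Z|%N.

(* Covector discrepancy DD(S) = max over linear functionals f on E of disc f S.
   (Every such value is <= size S, and f = 0 gives 0, so the max exists.) *)
Definition DD (S : seq E) : nat :=
  \max_(k < (size S).+1 | `[< exists f : {linear E -> R^o}, disc f S = k >]) k.

Definition cfg_compl (m : bitseq) (V : seq E) : seq E := mask (map negb m) V.

(* DD(V/W): linear functionals on E / lin(W) are exactly the linear functionals
   on E vanishing on lin(W); V/W consists of the images of the elements of V\W. *)
Definition DD_quot (V : seq E) (m : bitseq) : nat :=
  \max_(k < (size V).+1 | `[< exists f : {linear E -> R^o},
        (forall x, in_lin (mask m V) x -> f x = 0) /\
        disc f (cfg_compl m V) = k >]) k.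

End VectorConfigurations.

(* Main.v *)
Require Import Defs.
From HB Require Import structures.
From mathcomp Require Import all_boot all_order all_algebra.
From mathcomp Require Import boolp reals.
From mathcomp Require Import classical_sets zify ring lra.
Import Order.TTheory GRing.Theory Num.Theory.
Local Open Scope ring_scope.

Module ExtM.
Local Open Scope classical_set_scope.

Section MkLin.
Variables (R : realType) (E : lmodType R) (k : E -> R^o)
  (hk : forall c x y, k (c *: x + y) = c * k x + k y).
Definition kfun : E -> R^o := fun x => k x.
Lemma kfun_lin : linear kfun.
Proof. by move=> c x y; rewrite /kfun hk. Qed.
HB.instance Definition _ := GRing.isLinear.Build R E R^o *:%R kfun kfun_lin.
Definition mkLin : {linear E -> R^o} := kfun.
Lemma mkLinE x : mkLin x = k x. Proof. by []. Qed.
End MkLin.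

Section Ext.
Variables (R : realType) (E : lmodType R).

Definition par (w v : E) : bool := `[< exists a : R, v = a *: w >].

Variables (w z : E) (hz : ~~ par w z).

Definition G0 : set (E * R) := [set p | exists a b : R, p = (a *: w + b *: z, b)].
Definition funcl (Y : set (E * R)) := forall x a b, Y (x, a) -> Y (x, b) -> a = b.
Definition closd (Y : set (E * R)) :=
  forall x a y b c, Y (x, a) -> Y (y, b) -> Y (c *: x + y, c * a + b).
Definition good Y := funcl Y /\ closd Y.
Definition Qg Y := good (G0 `|` Y).

Lemma good_G0 : good G0.
Proof.
split.
  move=> x a b [a1 [b1 [-> ->]]] [a2 [b2 []]] e ->.
  apply/eqP; apply: contraNT hz => nb; apply/asboolP.
  have nb' : b1 - b2 != 0 by rewrite subr_eq0.
  have e2 : (b1 - b2) *: z = (a2 - a1) *: w.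
    rewrite !scalerBl; apply/eqP; rewrite subr_eq addrAC eq_sym subr_eq.
    by rewrite [X in _ == X]addrC e.
  exists ((b1 - b2)^-1 * (a2 - a1)).
  by rewrite -scalerA -e2 scalerA mulVf // scale1r.
move=> x a y b c [a1 [b1 [-> ->]]] [a2 [b2 [-> ->]]].
exists (c * a1 + a2), (c * b1 + b2); congr (_, _).
by rewrite !scalerDl !scalerDr !scalerA addrACA.
Qed.


Lemma chain_Qg (F : set (set (E * R))) :
  F `<=` Qg -> total_on F subset -> Qg (\bigcup_(X in F) X).
Proof.
move=> FQ Ftot.
set U := G0 `|` \bigcup_(X in F) X.
have key : forall p1 p2, U p1 -> U p2 ->
    exists Y, [/\ good Y, Y p1, Y p2 & Y `<=` U].
  have sub X : F X -> (G0 `|` X) `<=` U.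
    by move=> FX t [?|?]; [left|right; exists X].
  move=> p1 p2 [h1|[X1 F1 h1]] [h2|[X2 F2 h2]].
  - by exists G0; split => //; [exact: good_G0| move=> t ?; left].
  - by exists (G0 `|` X2); split => //; [exact: FQ| left| right| exact: sub].
  - by exists (G0 `|` X1); split => //; [exact: FQ| right| left| exact: sub].
  - have [s12|s21] := Ftot _ _ F1 F2.
    + by exists (G0 `|` X2); split => //; [exact: FQ|right; exact: s12|right|exact: sub].
    + by exists (G0 `|` X1); split => //; [exact: FQ|right|right; exact: s21|exact: sub].
split.
  move=> x a b h1 h2; have [Y [[fY _] y1 y2 _]] := key _ _ h1 h2.
  exact: fY y1 y2.
move=> x a y b c h1 h2; have [Y [[_ cY] y1 y2 YU]] := key _ _ h1 h2.
exact/YU/cY.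
Qed.

Lemma ext_exists : exists k : {linear E -> R^o}, k w = 0 /\ k z = 1.
Proof.
have [A [QA maxA]] := Zorn_bigcup chain_Qg.
have G0A : G0 `<=` A.
  move=> p G0p; apply: contrapT => Ap.
  apply: (maxA (G0 `|` A)); last by rewrite /Qg setUA setUid.
  split; first by move=> t At; right.
  by move=> /(_ p (or_introl G0p)).
have AQ : good A.
  suff -> : A = G0 `|` A by [].
  by apply/seteqP; split => t; [right|case=> //; exact: G0A].
have [fA cA] := AQ.
have A00 : A (0, 0).
  by apply: G0A; exists 0, 0; rewrite !scale0r addr0.
have tot : forall x, exists a, A (x, a).
  move=> x; apply: contrapT => nx.
  pose A' : set (E * R) := [set p | exists q c, A q /\ p = (q.1 + c *: x, q.2)].
  apply: (maxA A').
    split.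
      by move=> [y b] Ay; exists (y, b), 0; rewrite scale0r addr0.
    move=> /(_ (x, 0)) h; apply: nx; exists 0; apply: h.
    by exists (0, 0), 1; rewrite add0r scale1r.
  have sA' : G0 `|` A' = A'.
    apply/seteqP; split => t; last by right.
    case=> // /G0A At; exists t, 0; split => //; rewrite scale0r addr0.
    by case: t {At}.
  rewrite /Qg sA'; split.
    move=> y a b [[q1 q2] [c [Aq [-> ->]]]] [[q1' q2'] [c' [Aq' []]]] /= e ->.
    have cc : c = c'.
      apply: contrapT => ncc; apply: nx.
      have ncc' : c - c' != 0 by rewrite subr_eq0; apply/eqP.
      exists ((c - c')^-1 * (q2' - q2)).
      have Ad : A (q1' - q1, q2' - q2).
        by have := cA _ _ _ _ (-1) Aq Aq'; rewrite !scaleN1r mulN1r addrC [_ + q2']addrC.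
      have := cA _ _ _ _ ((c - c')^-1) Ad A00; rewrite !addr0.
      suff -> : (c - c')^-1 *: (q1' - q1) = x by [].
      apply: (scalerI ncc'); rewrite scalerA mulfV // scale1r scalerBl.
      apply/eqP; rewrite subr_eq addrAC eq_sym subr_eq addrC e.
      by rewrite addrC.
    subst c'; have e' : q1 = q1' by apply: (addIr (c *: x)).
    by subst q1'; exact: fA Aq Aq'.
  move=> y a y' b c [[q1 q2] [c1 [Aq [-> ->]]]] [[q1' q2'] [c2 [Aq' [-> ->]]]].
  exists (c *: q1 + q1', c * q2 + q2'), (c * c1 + c2); split; first exact: cA.
  congr (_, _) => /=.
  by rewrite scalerDr scalerDl scalerA addrACA.
pose k (x : E) : R := proj1_sig (cid (tot x)).
have kA x : A (x, k x) by rewrite /k; case: cid.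
have hk : forall c x y, k (c *: x + y) = c * k x + k y.
  by move=> c x y; apply: fA (kA _) (cA _ _ _ _ c (kA x) (kA y)).
exists (@mkLin R E k hk); rewrite !mkLinE; split.
  apply: fA (kA _) _; apply: G0A; exists 1, 0.
  by rewrite scale1r scale0r addr0.
apply: fA (kA _) _; apply: G0A; exists 0, 1.
by rewrite scale1r scale0r add0r.
Qed.

End Ext.

End ExtM.
Import ExtM.

Section Main.
Variables (R : realType) (E : lmodType R).
Implicit Types (S V : seq E) (f g h k : {linear E -> R^o}).

Definition Pz (f : E -> R) (S : seq E) : int := \sum_(v <- S) sgz (f v).

Lemma Pz_cons (f : E -> R) v S : Pz f (v :: S) = sgz (f v) + Pz f S.
Proof. by rewrite /Pz big_cons. Qed.

Lemma npos_nneg (f : E -> R) S : (npos f S)%:Z - (nneg f S)%:Z = Pz f S.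
Proof.
elim: S => [|v S IH]; first by rewrite /Pz big_nil.
rewrite Pz_cons -IH /npos /nneg /=.
case: (ltrgt0P (f v)) => hv.
- by rewrite (gtr0_sgz hv) /= add0n add1n -addn1 PoszD; lia.
- by rewrite (ltr0_sgz hv) /= add0n add1n -addn1 PoszD; lia.
- by rewrite hv sgz0 /= !add0n add0r.
Qed.

Lemma disc_Pz (f : E -> R) S : disc f S = `|Pz f S|%N.
Proof. by rewrite /disc -npos_nneg. Qed.

Lemma Pz_size (f : E -> R) S : (`|Pz f S| <= size S)%N.
Proof.
rewrite -lez_nat abszE.
elim: S => [|v S IH]; first by rewrite /Pz big_nil normr0.
rewrite Pz_cons /=; apply: le_trans (ler_normD _ _) _.
rewrite -addn1 PoszD addrC lerD // normr_sgz.
by case: (f v != 0).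
Qed.

Lemma disc_le_size (f : E -> R) S : (disc f S <= size S)%N.
Proof. by rewrite disc_Pz Pz_size. Qed.

Lemma DD_ub f S : (disc f S <= DD S)%N.
Proof.
rewrite /DD.
have hk : (disc f S < (size S).+1)%N by rewrite ltnS disc_le_size.
apply: (@leq_bigmax_cond _ _ (fun i : 'I_(size S).+1 => nat_of_ord i) (Ordinal hk)).
by apply/asboolP; exists f.
Qed.

Lemma zl_prop : forall (c : R) (x y : E), (fun _ : E => (0:R)) (c *: x + y) = c * (fun _ : E => (0:R)) x + (fun _ : E => (0:R)) y.
Proof. by move=> c x y; rewrite mulr0 addr0. Qed.
Definition zeroLin : {linear E -> R^o} := @mkLin R E (fun _ => 0) zl_prop.

Lemma DD_wit S : exists f, disc f S = DD S.
Proof.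
rewrite /DD.
have [|i0 Hi0 ->] := @eq_bigmax_cond _
   (fun i : 'I_(size S).+1 => `[< exists f : {linear E -> R^o}, disc f S = i >])
   (fun i => nat_of_ord i).
  apply/card_gt0P; exists ord0; apply/asboolP.
  exists zeroLin; rewrite disc_Pz /Pz big1 //= => v _.
  by rewrite sgz0.
by move: Hi0 => /asboolP.
Qed.

Lemma Pz_opp f S : Pz ((-1) \*: f) S = - Pz f S.
Proof.
rewrite /Pz -sumrN; apply: eq_bigr => v _ /=.
by rewrite scaleN1r sgzN.
Qed.

Lemma DD_witP S : exists f, Pz f S = (DD S)%:Z.
Proof.
have [f hf] := DD_wit S; move: hf; rewrite disc_Pz => hf.
case: (lerP 0 (Pz f S)) => hP.
  by exists f; rewrite -hf gez0_abs.
by exists ((-1) \*: f); rewrite Pz_opp -hf ltz0_abs.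
Qed.

Lemma Pz_le f S : Pz f S <= (DD S)%:Z.
Proof.
apply: le_trans (ler_norm _) _.
by rewrite -abszE lez_nat -disc_Pz DD_ub.
Qed.


Lemma sgz_add_small (a b : R) : `|b| < `|a| -> sgz (a + b) = sgz a.
Proof.
case: (ltrgt0P a) => ha.
- rewrite ltr_norml => /andP [h1 h2].
  by rewrite !gtr0_sgz //; lra.
- rewrite ltr_norml => /andP [h1 h2].
  by rewrite !ltr0_sgz //; lra.
- by rewrite ltNge normr_ge0.
Qed.

Lemma pert_gen (g h : E -> R) S : exists2 e : R, 0 < e &
  forall e', 0 < e' -> e' <= e -> forall v, v \in S ->
    sgz (g v + e' * h v) = if g v == 0 then sgz (h v) else sgz (g v).
Proof.
elim: S => [|v S [e0 he0 IH]]; first by exists 1.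
pose d := if g v == 0 then 1 else `|g v| / (`|h v| + 1).
have hd : 0 < d.
  rewrite /d; case: eqP => // /eqP gv.
  by apply: divr_gt0; [rewrite normr_gt0 | apply: ltr_pwDr; rewrite ?normr_ge0].
exists (Num.min e0 d); first by rewrite lt_min he0 hd.
move=> e' he' le' u; rewrite inE => /orP [/eqP ->|uS]; last first.
  by apply: IH => //; apply: le_trans le' _; rewrite ge_min lexx.
have led : e' <= d by apply: le_trans le' _; rewrite ge_min lexx orbT.
case: eqP => gv.
  by rewrite gv add0r sgzM gtr0_sgz // mul1r.
apply: sgz_add_small; rewrite normrM (gtr0_norm he').
have h1 : 0 < `|h v| + 1 by apply: ltr_pwDr; rewrite ?normr_ge0.
apply: (@lt_le_trans _ _ (e' * (`|h v| + 1))).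
  by rewrite mulrDr mulr1 ltrDl.
have -> : `|g v| = d * (`|h v| + 1).
  by rewrite /d; move/eqP/negbTE: gv => ->; rewrite divfK // gt_eqF.
by rewrite ler_pM2r.
Qed.

Lemma Pz_split (g : E -> R) (F : E -> int) S :
  \sum_(v <- S) (if g v == 0 then F v else sgz (g v)) =
  Pz g S + \sum_(v <- filter (fun v => g v == 0) S) F v.
Proof.
rewrite big_filter [X in _ + X]big_mkcond /Pz -big_split /=; apply: eq_bigr => v _.
by case: eqP => [->|_]; rewrite ?sgz0 ?add0r ?addr0.
Qed.

Lemma pert f h S : exists2 e : R, 0 < e &
  Pz (f \+ e \*: h) S = Pz f S + Pz h (filter (fun v => f v == 0) S) /\
  forall v, v \in S -> ((f \+ e \*: h) v == 0) = (f v == 0) && (h v == 0).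
Proof.
have [e he H] := pert_gen f h S; exists e => //; split.
  rewrite -Pz_split /Pz big_seq_cond [RHS]big_seq_cond; apply: eq_bigr => v /andP [vS _].
  exact: H.
move=> v vS; rewrite -sgz_eq0 /= (H e he (lexx e) v vS).
by case: ifP => hf; rewrite sgz_eq0 ?hf.
Qed.

Lemma GUB g V : Pz g V + (DD (filter (fun v => g v == 0) V))%:Z <= (DD V)%:Z.
Proof.
have [h hh] := DD_witP (filter (fun v => g v == 0) V).
have [e he [H _]] := pert g h V.
by rewrite -hh -H Pz_le.
Qed.


Local Notation par := (@par R E).

Lemma parP w v : reflect (exists a : R, v = a *: w) (par w v).
Proof. exact: asboolP. Qed.

Lemma par_lin g w v : par w v -> g w = 0 -> g v = 0.
Proof. by move=> /parP [a ->] gw; rewrite linearZ /= gw; rewrite /GRing.scale /= mulr0. Qed.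

Lemma par_refl w : par w w.
Proof. by apply/parP; exists 1; rewrite scale1r. Qed.

Lemma par0 v : par 0 v = (v == 0).
Proof.
apply/parP/eqP => [[a ->]|->]; first by rewrite scaler0.
by exists 0; rewrite scaler0.
Qed.

Lemma par_inter u v x : par u x -> par v x -> ~~ par v u -> x = 0.
Proof.
move=> /parP [a ->] /parP [b e] nvu.
have [->|a0] := eqVneq a 0; first by rewrite scale0r.
case/negP: nvu; apply/parP; exists (a^-1 * b).
by rewrite -scalerA -e scalerA mulVf // scale1r.
Qed.

Lemma lin0 g : g 0 = 0.
Proof. exact: linear0. Qed.

Lemma GenOpt w S (M : int) g : g w = 0 -> Pz g S = M ->
  (forall g', g' w = 0 -> Pz g' S <= M) ->
  exists g', [/\ g' w = 0, Pz g' S = M &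
                 forall v, v \in S -> ~~ par w v -> g' v != 0].
Proof.
move=> gw gM opt.
suff: forall L : seq E, {subset L <= S} -> exists g', [/\ g' w = 0, Pz g' S = M &
                 forall v, v \in L -> ~~ par w v -> g' v != 0].
  by move/(_ S (fun x hx => hx)).
elim=> [|v L IH] sub; first by exists g.
have [|g' [g'w g'M g'L]] := IH; first by move=> x xL; apply: sub; rewrite inE xL orbT.
have vS : v \in S by apply: sub; rewrite inE eqxx.
case: (boolP (par w v || (g' v != 0))) => hv.
  exists g'; split => // x; rewrite inE => /orP [/eqP ->|xL] nx; last exact: g'L.
  by move: hv; rewrite (negbTE nx).
move: hv; rewrite negb_or negbK => /andP [nwv /eqP g'v].
have [k [kw kv]] := @ext_exists R E w v nwv.
have [e he [He Hz]] := pert g' k S.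
have [e2 he2 [He2 _]] := pert g' ((-1) \*: k) S.
have c1 := opt (g' \+ e \*: k).
have c2 := opt (g' \+ e2 \*: ((-1) \*: k)).
rewrite He g'M /= g'w kw ?mulr0 ?scaler0 addr0 in c1.
rewrite He2 g'M Pz_opp /= g'w kw ?mulr0 ?scaler0 addr0 in c2.
have P0 : Pz k (filter (fun v0 => g' v0 == 0) S) = 0.
  by move: (c1 erefl) (c2 erefl); lra.
exists (g' \+ e \*: k); split.
- by rewrite /= g'w kw ?mulr0 ?scaler0 addr0.
- by rewrite He g'M P0 addr0.
- move=> x; rewrite inE => /orP [/eqP ->|xL] nx.
    by rewrite Hz // kv oner_eq0 andbF.
  rewrite Hz; first by rewrite negb_and g'L.
  by apply: sub; rewrite inE xL orbT.
Qed.


Lemma Pz_filter_split (g : E -> R) (p : pred E) S :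
  Pz g S = Pz g (filter p S) + Pz g (filter (predC p) S).
Proof. by rewrite /Pz !big_filter (bigID p). Qed.

Lemma count_le_in (a1 a2 : pred E) S : (forall y, y \in S -> a1 y -> a2 y) ->
  (count a1 S <= count a2 S)%N.
Proof.
elim: S => [//|y S IH] sub /=.
have := IH (fun z zS => sub z (ltac:(by rewrite inE zS orbT))).
have : (a1 y <= a2 y)%N.
  by case: (a1 y) (sub y (mem_head y S)) => // /(_ isT) ->.
lia.
Qed.

Lemma count_lt (a1 a2 : pred E) S x : (forall y, y \in S -> a1 y -> a2 y) ->
  x \in S -> a2 x -> ~~ a1 x -> (count a1 S < count a2 S)%N.
Proof.
elim: S => [//|y S IH] sub; rewrite inE => /orP [/eqP <-|xS] a2x na1x /=.
  rewrite a2x (negbTE na1x) add0n add1n ltnS.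
  by apply: count_le_in => z zS; apply: sub; rewrite inE zS orbT.
have := IH (fun z zS => sub z (ltac:(by rewrite inE zS orbT))) xS a2x na1x.
have : (a1 y <= a2 y)%N.
  by case: (a1 y) (sub y (mem_head y S)) => // /(_ isT) ->.
lia.
Qed.

Lemma LineSplit f S : 0 < Pz f S ->
  exists u, [/\ u \in S, u != 0 & 0 < Pz f (filter (par u) S)].
Proof.
move: {-1}(size S) (leqnn (size S)) => n; elim: n S => [|n IH] S hS hP.
  by move: hS; rewrite leqn0 => /nilP eS; move: hP; rewrite eS /Pz big_nil.
have [v vS fv] : exists2 v, v \in S & f v != 0.
  apply/hasP; apply: contraTT hP => /hasPn hn.
  rewrite /Pz big_seq big1 // => v /hn; rewrite negbK => /eqP ->.
  by rewrite sgz0.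
have v0 : v != 0 by apply: contraNneq fv => ->; rewrite lin0.
have [h1|h1] := ltP 0 (Pz f (filter (par v) S)); first by exists v.
set S' := filter (predC (par v)) S.
have hP' : 0 < Pz f S' by move: hP; rewrite (Pz_filter_split f (par v)) -/S'; lra.
have sz : (size S' < size S)%N.
  rewrite /S' size_filter -count_predT.
  apply: (@count_lt (predC (par v)) predT S v _ vS) => //=; by rewrite par_refl.
have [u [uS' u0 hu]] := IH S' (ltnSE (leq_trans sz hS)) hP'.
have uS : u \in S by move: uS'; rewrite mem_filter => /andP [].
have nvu : ~~ par v u by move: uS'; rewrite mem_filter => /andP [].
exists u; split => //.
suff -> : Pz f (filter (par u) S) = Pz f (filter (par u) S') by [].
rewrite /Pz /S' big_filter big_filter_cond (bigID (par v)) /=.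
rewrite [X in X + _]big1 ?add0r; last first.
  by move=> x /andP [pux pvx]; rewrite (par_inter _ _ _ pux pvx nvu) lin0 sgz0.
by rewrite big_filter_cond; apply: eq_bigl => x /=; rewrite andbT andbC.
Qed.

Lemma GenK u S : exists k, k u = 0 /\ forall v, v \in S -> ~~ par u v -> k v != 0.
Proof.
elim: S => [|v S [k [ku kS]]]; first by exists zeroLin.
case: (boolP (par u v || (k v != 0))) => hv.
  exists k; split => // x; rewrite inE => /orP [/eqP ->|xS] nx; last exact: kS.
  by move: hv; rewrite (negbTE nx).
move: hv; rewrite negb_or negbK => /andP [nuv /eqP kv].
have [k' [k'u k'v]] := @ext_exists R E u v nuv.
have [e he [_ Hz]] := pert k k' (v :: S).
exists (k \+ e \*: k'); split.
  by rewrite /= ku k'u ?mulr0 ?scaler0 addr0.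
move=> x xS nx; rewrite Hz // negb_and.
move: xS; rewrite inE => /orP [/eqP ->|xS]; first by rewrite k'v oner_eq0 orbT.
by rewrite kS.
Qed.


Definition lv (f k : E -> R) v := - k v / f v.
Definition rs (f k : E -> R) (lam : R) v :=
  if k v + lam * f v == 0 then sgz (f v) else sgz (k v + lam * f v).

Lemma lv_eq (f k : E -> R) lam v : f v != 0 ->
  k v + lam * f v = (lam - lv f k v) * f v.
Proof. by move=> fv; rewrite /lv mulrBl !mulNr opprK divfK // addrC. Qed.

Lemma gzero (f k : E -> R) lam v : f v != 0 ->
  (k v + lam * f v == 0) = (lv f k v == lam).
Proof.
by move=> fv; rewrite lv_eq // mulf_eq0 (negbTE fv) orbF subr_eq0 eq_sym.
Qed.

Lemma rs_formula (f k : E -> R) lam v : (f v == 0 -> k v = 0) ->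
  rs f k lam v = if lv f k v <= lam then sgz (f v) else - sgz (f v).
Proof.
move=> hfk; rewrite /rs; case: (eqVneq (f v) 0) => fv.
  by rewrite fv hfk ?fv // mulr0 addr0 eqxx sgz0 oppr0; case: ifP.
rewrite gzero // lv_eq // sgzM.
case: (ltgtP (lv f k v) lam) => h.
- by rewrite gtr0_sgz ?subr_gt0 // mul1r.
- by rewrite ltr0_sgz ?subr_lt0 // mulN1r.
- by [].
Qed.

Lemma prev_pt (s : seq R) lam : 0 < lam -> exists l1, [/\ 0 <= l1, l1 < lam,
  (forall x, x \in s -> x < lam -> x <= l1) & (l1 = 0 \/ l1 \in s)].
Proof.
move=> hlam; elim: s => [|x s [l1 [h0 h1 h2 h3]]].
  by exists 0; split => //; left.
case: (boolP ((x < lam) && (l1 < x))) => hx.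
  case/andP: hx => hx1 hx2.
  exists x; split => //.
  - exact: le_trans h0 (ltW hx2).
  - move=> y; rewrite inE => /orP [/eqP ->//|ys] ylam.
    exact: le_trans (h2 y ys ylam) (ltW hx2).
  - by right; rewrite mem_head.
exists l1; split => //.
  move=> y; rewrite inE => /orP [/eqP ->|ys] ylam; last exact: h2.
  by move: hx; rewrite ylam /= -leNgt.
by case: h3 => [->|h3]; [left|right; rewrite inE h3 orbT].
Qed.

Lemma le_sum_seq (F : E -> R) S x : (forall y, 0 <= F y) -> x \in S ->
  F x <= \sum_(y <- S) F y.
Proof.
move=> F0; elim: S => [//|y S IH]; rewrite inE big_cons => /orP [/eqP ->|xS].
  by rewrite lerDl sumr_ge0.
by apply: le_trans (IH xS) _; rewrite lerDr.
Qed.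


Definition Zs (g : E -> R) S := filter (fun v => g v == 0) S.

Lemma int_aux (a b c d : int) : b <= c -> a + c <= d -> a + b = d -> a + c = d /\ c <= b.
Proof. lia. Qed.

Lemma Walk V f k u :
  (forall v, v \in V -> f v == 0 -> k v = 0) ->
  Pz f V = (DD V)%:Z ->
  0 < Pz f (filter (par u) V) ->
  (forall v, v \in V -> (k v == 0) = par u v) ->
  exists lam : R, [/\ 0 <= lam,
     Pz (k \+ lam \*: f) V + (DD (Zs (k \+ lam \*: f) V))%:Z = (DD V)%:Z &
     (0 < DD (Zs (k \+ lam \*: f) V))%N].
Proof.
move=> hfk hopt hu hku.
pose RO lam := \sum_(v <- V) rs f k lam v = (DD V)%:Z.
have RO_split lam : \sum_(v <- V) rs f k lam v =
    Pz (k \+ lam \*: f) V + Pz f (Zs (k \+ lam \*: f) V).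
  by rewrite /Zs -Pz_split.
pose meas (lam : R) := (count (fun v => (lv f k v < lam)%R) V + (0 < lam)%R)%N.
suff main : forall N lam, 0 <= lam -> (meas lam <= N)%N -> RO lam ->
  exists lam : R, [/\ 0 <= lam,
     Pz (k \+ lam \*: f) V + (DD (Zs (k \+ lam \*: f) V))%:Z = (DD V)%:Z &
     (0 < DD (Zs (k \+ lam \*: f) V))%N].
  pose lam0 := 1 + \sum_(v <- V) `|lv f k v|.
  have hlam0 v : v \in V -> lv f k v <= lam0.
    move=> vV; apply: le_trans (ler_norm _) _.
    apply: le_trans (@le_sum_seq (fun y => `|lv f k y|) V v (fun y => normr_ge0 _) vV) _.
    by rewrite lerDr.
  apply: (main _ lam0 _ (leqnn _)).
    by rewrite addr_ge0 // sumr_ge0.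
  rewrite /RO -hopt /Pz big_seq [RHS]big_seq; apply: eq_bigr => v vV.
  by rewrite rs_formula ?hlam0 //; exact: hfk.
elim=> [|N IH] lam hlam hm hRO.
all: have tight : Pz (k \+ lam \*: f) V + (DD (Zs (k \+ lam \*: f) V))%:Z = (DD V)%:Z /\
        (DD (Zs (k \+ lam \*: f) V))%:Z <= Pz f (Zs (k \+ lam \*: f) V).
all: try (apply: (@int_aux _ _ _ _ (Pz_le f (Zs (k \+ lam \*: f) V)) (GUB (k \+ lam \*: f) V));
     by move: hRO; rewrite /RO RO_split).
all: case: tight => tight hZ.
all: case: (posnP (DD (Zs (k \+ lam \*: f) V))) => hDD; last by exists lam.
all: have PZ0 : Pz f (Zs (k \+ lam \*: f) V) = 0
  by move: hZ (Pz_le f (Zs (k \+ lam \*: f) V)); rewrite hDD; lia.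
all: have lam0 : 0 < lam.
all: try (rewrite lt_def hlam andbT; apply/eqP => l0; move: PZ0;
    have -> : Zs (k \+ lam \*: f) V = filter (par u) V by
      apply: eq_in_filter => v vV /=; rewrite l0 scale0r addr0 hku);
    try (by move: hu; lia).
  by move: hm; rewrite /meas lam0 addn1.
have [l1 [l10 l1lam l1max l1in]] := @prev_pt (map (lv f k) V) lam lam0.
apply: (IH l1 l10).
  have : (meas l1 < meas lam)%N.
    rewrite /meas lam0 addn1 ltnS.
    case: l1in => [l1z|l1in].
      rewrite l1z ltxx addn0; apply: count_le_in => y _ /= hy.
      exact: lt_trans hy lam0.
    case/mapP: l1in => v0 v0V l1e.
    have : (count (fun v => (lv f k v < l1)%R) V < count (fun v => (lv f k v < lam)%R) V)%N.
      apply: (@count_lt _ _ V v0) => //=.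
      - by move=> y _ hy; exact: lt_trans hy l1lam.
      - by rewrite -l1e.
      - by rewrite -l1e ltxx.
    by case: (0 < l1); lia.
  by move: hm; lia.
rewrite /RO.
have ptw v : v \in V -> rs f k l1 v =
    rs f k lam v - 2%:R * (if (k \+ lam \*: f) v == 0 then sgz (f v) else 0).
  move=> vV; rewrite !rs_formula; try exact: hfk vV.
  case: (eqVneq (f v) 0) => fv.
    by rewrite fv sgz0 oppr0 !if_same mulr0 subr0.
  rewrite /= gzero //.
  case: (ltgtP (lv f k v) lam) => h.
  - by rewrite (l1max _ (map_f _ vV) h) mulr0 subr0.
  - have -> : (lv f k v <= l1) = false by apply/negbTE; rewrite -ltNge (lt_trans l1lam h).
    by rewrite mulr0 subr0.
  - have -> : (lv f k v <= l1) = false by apply/negbTE; rewrite -ltNge h.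
    lia.
rewrite big_seq (eq_bigr _ ptw) -big_seq sumrB -mulr_sumr -big_mkcond -big_filter.
by move: hRO; rewrite /RO => ->; move: PZ0; rewrite /Zs /Pz => ->; rewrite mulr0 subr0.
Qed.


Lemma DD_size S : (DD S <= size S)%N.
Proof. by have [f <-] := DD_wit S; exact: disc_le_size. Qed.

Lemma MI n V : (size V <= n)%N -> (0 < DD V)%N ->
  exists g w, [/\ w \in V, w != 0, (forall v, v \in V -> (g v == 0) = par w v),
     Pz g V + (DD (Zs g V))%:Z = (DD V)%:Z & (0 < DD (Zs g V))%N].
Proof.
elim: n V => [|n IH] V hs hDD.
  by move: hs; rewrite leqn0 => /nilP eV; move: hDD; rewrite eV; have := DD_size [::]; rewrite leqn0 => /eqP ->.
have [f0 hf0] := DD_witP V.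
have [f [_ fopt fgen]] := GenOpt 0 V (DD V) f0 (lin0 f0) hf0 (fun g' _ => Pz_le g' V).
have hf0z v : v \in V -> (f v == 0) = (v == 0).
  move=> vV; case: (eqVneq v 0) => [->|v0]; first by rewrite lin0 eqxx.
  by apply/negbTE; apply: fgen => //; rewrite par0.
have [|u [uV u0 hu]] := LineSplit f V; first by rewrite fopt; move: hDD; lia.
have [k [ku kgen]] := GenK u V.
have hku v : v \in V -> (k v == 0) = par u v.
  move=> vV; case: (boolP (par u v)) => pv; first by rewrite (par_lin k _ _ pv ku) eqxx.
  by apply/negbTE; apply: kgen.
have hfk v : v \in V -> f v == 0 -> k v = 0.
  by move=> vV; rewrite hf0z // => /eqP ->; rewrite lin0.
have [lam [lam0 ht hpos]] := @Walk V f k u hfk fopt hu hku.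
case: (eqVneq lam 0) => [l0|ln0].
  exists (k \+ lam \*: f), u; split => // v vV.
  by rewrite /= l0 scale0r addr0 hku.
pose G : {linear E -> R^o} := k \+ lam \*: f.
change (Pz G V + (DD (Zs G V))%:Z = (DD V)%:Z) in ht.
change (is_true (0 < DD (Zs G V))%N) in hpos.
have Gu : G u != 0.
  rewrite /G /= ku add0r; apply: mulf_neq0 => //.
  by rewrite hf0z // u0.
set Z := Zs G V.
have sz : (size Z < size V)%N.
  rewrite /Z /Zs size_filter -count_predT.
  by apply: (@count_lt _ _ V u) => //=; rewrite (negbTE Gu).
have [g' [w' [w'Z w'0 hzw' ht' hpos']]] := IH Z (ltnSE (leq_trans sz hs)) hpos.
have [e he [He Hz]] := pert G g' V.
have w'V : w' \in V by move: w'Z; rewrite mem_filter => /andP [].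
have Gw' : G w' = 0 by move: w'Z; rewrite mem_filter => /andP [/eqP].
have ZH : Zs (G \+ e \*: g') V = Zs g' Z.
  rewrite /Z /Zs -filter_predI; apply: eq_in_filter => v vV.
  by rewrite Hz // andbC.
exists (G \+ e \*: g'), w'; split => //.
- move=> v vV; rewrite Hz //.
  case: (boolP (par w' v)) => pv.
    have Gv : G v = 0 by exact: par_lin G _ _ pv Gw'.
    by rewrite Gv eqxx /= hzw' // /Z /Zs mem_filter vV Gv eqxx.
  case: (eqVneq (G v) 0) => Gv //=.
  by rewrite hzw' ?(negbTE pv) // /Z /Zs mem_filter vV Gv eqxx.
- rewrite He ZH; change [seq v <- V | G v == 0] with Z; move: ht ht'; rewrite -/Z /Zs; lia.
- by rewrite ZH.
Qed.


Lemma in_lin_par w V x : w \in V ->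
  (in_lin (filter (par w) V) x <-> exists a : R, x = a *: w).
Proof.
move=> wV; set W := filter (par w) V; split.
  case=> c ->.
  apply: (big_ind (fun y => exists a : R, y = a *: w)).
  - by exists 0; rewrite scale0r.
  - by move=> y1 y2 [a1 ->] [a2 ->]; exists (a1 + a2); rewrite scalerDl.
  - move=> i _; have : W`_i \in W by apply: mem_nth.
    rewrite mem_filter => /andP [/parP [b ->] _].
    by exists (c i * b); rewrite scalerA.
move=> [a ->].
have wW : w \in W by rewrite mem_filter par_refl.
have hi : (index w W < size W)%N by rewrite index_mem.
exists (fun i => if i == Ordinal hi then a else 0).
rewrite (bigD1 (Ordinal hi)) //= eqxx big1 ?addr0; first by rewrite nth_index.
by move=> i /negbTE ->; rewrite scale0r.
Qed.

Lemma size_compl (m : bitseq) V : (size (cfg_compl m V) <= size V)%N.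
Proof. by apply: size_subseq; apply: mask_subseq. Qed.

Lemma DDq_ub (m : bitseq) V f : (forall x, in_lin (mask m V) x -> f x = 0) ->
  (disc f (cfg_compl m V) <= DD_quot V m)%N.
Proof.
move=> hf; rewrite /DD_quot.
have hk : (disc f (cfg_compl m V) < (size V).+1)%N.
  by rewrite ltnS; apply: leq_trans (disc_le_size _ _) (size_compl _ _).
apply: (@leq_bigmax_cond _ _ (fun i : 'I_(size V).+1 => nat_of_ord i) (Ordinal hk)).
by apply/asboolP; exists f.
Qed.

Lemma DDq_wit (m : bitseq) V : exists f, (forall x, in_lin (mask m V) x -> f x = 0) /\
  disc f (cfg_compl m V) = DD_quot V m.
Proof.
rewrite /DD_quot.
have [|i0 Hi0 ->] := @eq_bigmax_cond _
   (fun i : 'I_(size V).+1 => `[< exists f : {linear E -> R^o},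
        (forall x, in_lin (mask m V) x -> f x = 0) /\ disc f (cfg_compl m V) = i >])
   (fun i => nat_of_ord i).
  apply/card_gt0P; exists ord0; apply/asboolP.
  exists zeroLin; split => //; rewrite disc_Pz /Pz big1 //= => v _.
  by rewrite sgz0.
by move: Hi0 => /asboolP.
Qed.

Lemma final V : (0 < DD V)%N ->
  exists m : bitseq,
    [/\ size m = size V,
        rank1 (mask m V),
        (forall i, (i < size V)%N -> (in_lin (mask m V) V`_i <-> nth false m i)),
        (0 < DD (mask m V))%N
      & DD V = (DD (mask m V) + DD_quot V m)%N].
Proof.
move=> hDD; have [g [w [wV w0 hgw ht hpos]]] := @MI (size V) V (leqnn (size V)) hDD.
pose m := map (par w) V.
have hW : mask m V = filter (par w) V by rewrite filter_mask.
have hC : cfg_compl m V = filter (predC (par w)) V.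
  by rewrite /cfg_compl /m -map_comp filter_mask.
have ZW : Zs g V = filter (par w) V by apply: eq_in_filter.
have gw : g w = 0 by apply/eqP; rewrite hgw ?par_refl.
have hlin x : in_lin (mask m V) x <-> exists a, x = a *: w.
  by rewrite hW; exact: in_lin_par.
have van (g' : {linear E -> R^o}) : g' w = 0 -> forall x, in_lin (mask m V) x -> g' x = 0.
  by move=> g'w x /hlin hx; apply: (par_lin g' _ _ (introT (parP _ _) hx) g'w).
have PzW0 (g' : {linear E -> R^o}) : g' w = 0 -> Pz g' (filter (par w) V) = 0.
  move=> g'w; rewrite /Pz big_seq big1 // => v; rewrite mem_filter => /andP [pv _].
  by rewrite (par_lin g' _ _ pv g'w) sgz0.
have Pzdisc (g' : E -> R) S : Pz g' S <= (disc g' S)%:Z.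
  by rewrite disc_Pz abszE ler_norm.
exists m; split.
- by rewrite size_map.
- exists w; split => //.
- move=> i hi; rewrite hlin (nth_map 0) //.
  by split => [h|]; [apply/parP | move/parP].
- by rewrite hW -ZW.
apply/eqP; rewrite eqn_leq; apply/andP; split.
  have hq := @DDq_ub m V g (van g gw).
  have := Pzdisc g (cfg_compl m V).
  have := Pz_filter_split g (par w) V.
  rewrite -lez_nat PoszD PzW0 // -hC hW.
  move: hq ht; rewrite ZW -lez_nat; lia.
have [g1 [g1van g1d]] := DDq_wit m V.
have g1w : g1 w = 0 by apply: g1van; apply/hlin; exists 1; rewrite scale1r.
have [g1' [g1'w g1'P]] : exists g1' : {linear E -> R^o}, g1' w = 0 /\
    Pz g1' (cfg_compl m V) = (DD_quot V m)%:Z.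
  move: g1d; rewrite disc_Pz => g1d.
  case: (lerP 0 (Pz g1 (cfg_compl m V))) => hP.
    by exists g1; split => //; rewrite -g1d gez0_abs.
  exists ((-1) \*: g1); split; first by rewrite /= g1w scaler0.
  by rewrite Pz_opp -g1d ltz0_abs.
have opt (g' : {linear E -> R^o}) : g' w = 0 -> Pz g' (cfg_compl m V) <= (DD_quot V m)%:Z.
  move=> g'w; apply: le_trans (Pzdisc _ _) _.
  by rewrite lez_nat; apply: DDq_ub; apply: van.
have [g2 [g2w g2P g2gen]] := @GenOpt w (cfg_compl m V) (DD_quot V m)%:Z g1' g1'w g1'P opt.
have [h0 hh0] := DD_witP (mask m V).
have [e he [He _]] := pert g2 h0 V.
have Z2 : filter (fun v => g2 v == 0) V = filter (par w) V.
  apply: eq_in_filter => v vV.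
  case: (boolP (par w v)) => pv; first by rewrite (par_lin g2 _ _ pv g2w) eqxx.
  by apply/negbTE; apply: g2gen => //; rewrite hC mem_filter /= pv.
have := Pz_le (g2 \+ e \*: h0) V.
rewrite He Z2 (Pz_filter_split g2 (par w) V) PzW0 // -hC g2P -hW hh0.
by rewrite -lez_nat PoszD; lia.
Qed.

End Main.

Theorem mainTheorem14 (R : realType) (E : lmodType R) (V : seq E) :
  (0 < DD V)%N ->
  exists m : bitseq,
    [/\ size m = size V,
        rank1 (mask m V),
        (forall i, (i < size V)%N -> (in_lin (mask m V) V`_i <-> nth false m i)),
        (0 < DD (mask m V))%N
      & DD V = (DD (mask m V) + DD_quot V m)%N].
Proof. exact: final. Qed.
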